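(* Let $\Bbbk$ be a field and $q\in\Bbbk$ with $[m]_q:=1+q+\cdots+q^{m-1}\ne0$ for all $m\ge1$, and $[m]_q!=[1]_q\cdots[m]_q$. Then for all $k\ge1$, $$\det \begin{pmatrix} 1&\frac{t}{[1]_q!}&\frac{t^2}{[2]_q!}&\ldots &\frac{t^k}{[k]_q!}\\ 1&\frac{1}{[1]_q!}&\frac{1}{[2]_q!}&\ldots &\frac{1}{[k]_q!}\\ 0&1&\frac{1}{[1]_q!}&\ldots &\frac{1}{[k-1]_q!}\\ \vdots&\vdots&\ddots&\ddots&\vdots \\ 0&0&\ldots &1&\frac{1}{[1]_q!} \end{pmatrix} =\frac{(1-t)(q-t)\cdots (q^{k-1}-t)}{[k]_q!}.$$
   Context: The matrix is $(k+1)\times(k+1)$; row $r\ge3$ has zeros in its first $r-2$ entries, $1$ in entry $r-1$, followed by $1/[1]_q!,1/[2]_q!,\dots$. *)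

(* Defs.v *)
From mathcomp Require Import all_boot all_order all_algebra.
Set Implicit Arguments. Unset Strict Implicit. Unset Printing Implicit Defensive.
Import GRing.Theory.
Local Open Scope ring_scope.

Definition qint (F : fieldType) (q : F) (m : nat) : F := \sum_(i < m) q ^+ i.

Definition qfact (F : fieldType) (q : F) (m : nat) : F :=
  \prod_(1 <= i < m.+1) qint q i.

(* The (k+1)x(k+1) matrix of the statement (0-based indices):
   row 0 : t^j / [j]_q!
   row i >= 1 : entry j is 1/[j-(i-1)]_q! if i-1 <= j, else 0
   (so row 1 is 1/[j]_q!, and row i >= 2 has zeros then 1 at column i-1). *)
Definition qmat (F : fieldType) (q t : F) (k : nat) : 'M[F]_(k.+1) :=
  \matrix_(i < k.+1, j < k.+1)
    if i == 0%N :> nat then t ^+ j / qfact q j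
    else if (i.-1 <= j)%N then (qfact q (j - i.-1))^-1 else 0.

(* Main.v *)
Require Import Defs.
From mathcomp Require Import all_boot all_order all_algebra.
From mathcomp Require Import ring.
Set Implicit Arguments. Unset Strict Implicit. Unset Printing Implicit Defensive.
Import GRing.Theory.
Local Open Scope ring_scope.

Lemma qfact0 (F : fieldType) (q : F) : qfact q 0 = 1.
Proof. by rewrite /qfact big_geq. Qed.

Lemma qfactS (F : fieldType) (q : F) m : qfact q m.+1 = qfact q m * qint q m.+1.
Proof. by rewrite /qfact big_nat_recr. Qed.

Lemma qfact_neq0 (F : fieldType) (q : F)
  (hq : forall m : nat, (1 <= m)%N -> qint q m != 0) m : qfact q m != 0.
Proof.
elim: m => [|m IH]; first by rewrite qfact0 oner_neq0.
by rewrite qfactS mulf_neq0 // hq.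
Qed.

Lemma qint0 (F : fieldType) (q : F) : qint q 0 = 0.
Proof. by rewrite /qint big_ord0. Qed.

Lemma qint_add (F : fieldType) (q : F) a b :
  qint q (a + b) = qint q a + q ^+ a * qint q b.
Proof.
rewrite /qint big_split_ord mulr_sumr; congr (_ + _).
by apply: eq_bigr => i _; rewrite exprD.
Qed.

Definition Gm (F : fieldType) (q : F) (v : nat -> F) k : 'M[F]_(k.+1) :=
  \matrix_(i < k.+1, j < k.+1)
    if i == 0%N :> nat then v j
    else if (i.-1 <= j)%N then (qfact q (j - i.-1))^-1 else 0.

Lemma Gm_ext (F : fieldType) (q : F) v w k :
  (forall j, v j = w j) -> Gm q v k = Gm q w k.
Proof. by move=> h; apply/matrixP => i j; rewrite !mxE h. Qed.

Lemma det_Gm_S (F : fieldType) (q : F) v k :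
  \det (Gm q v k.+1) = v 0%N * \det (Gm q (fun j => (qfact q j.+1)^-1) k)
                       - \det (Gm q (fun j => v j.+1) k).
Proof.
rewrite (expand_det_col _ ord0) !big_ord_recl big1; last first.
  move=> i _; rewrite mxE /=.
  by rewrite mul0r.
rewrite addr0 /cofactor !mxE /= qfact0 invr1 expr0 expr1 mul1r mulN1r mul1r.
have -> : row' ord0 (col' ord0 (Gm q v k.+1)) = Gm q (fun j => (qfact q j.+1)^-1) k.
  apply/matrixP => i j; rewrite !mxE /=.
  by case: i => [[|i] Hi] //=.
congr (_ - \det _).
apply/matrixP => i j; rewrite !mxE /=.
case: i => [[|i] Hi] //=.
Qed.

Definition vv (F : fieldType) (q t : F) (s : nat) (j : nat) : F :=
  t ^+ (j + s) / qfact q (j + s).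

Definition dd (F : fieldType) (q : F) (n : nat) : F :=
  match n with 0 => 1 | k.+1 => \det (Gm q (vv q 1 1) k) end.

Lemma hB (F : fieldType) (q t : F) k s :
  \det (Gm q (vv q t s) k) =
  \sum_(j < k.+1) (-1) ^+ j * vv q t s j * dd q (k - j).
Proof.
elim: k s => [|k IH] s.
  by rewrite [Gm _ _ 0]mx11_scalar det_scalar1 mxE big_ord1 /= mul1r mulr1.
rewrite det_Gm_S.
have -> : Gm q (fun j => (qfact q j.+1)^-1) k = Gm q (vv q 1 1) k.
  by apply: Gm_ext => j; rewrite /vv expr1n div1r addn1.
have -> : Gm q (fun j => vv q t s j.+1) k = Gm q (vv q t s.+1) k.
  by apply: Gm_ext => j; rewrite /vv addnS.
rewrite IH [RHS]big_ord_recl /= expr0 mul1r; congr (_ + _).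
rewrite -sumrN; apply: eq_bigr => j _.
rewrite /bump /= add1n subSS exprS mulN1r !mulNr.
by rewrite /vv addnS.
Qed.

Definition ee (F : fieldType) (q : F) (n : nat) : F := \prod_(i < n) q ^+ i.

Definition PP (F : fieldType) (q x : F) (k : nat) : F :=
  \sum_(j < k.+1) x ^+ j * ee q (k - j) / (qfact q j * qfact q (k - j)).

Lemma PP_rec (F : fieldType) (q : F)
  (hq : forall m : nat, (1 <= m)%N -> qint q m != 0) x k :
  qint q k.+1 * PP q x k.+1 = (q ^+ k + x) * PP q x k.
Proof.
have nf := qfact_neq0 hq.
rewrite /PP mulr_sumr.
have hs : forall j : 'I_(k.+2), qint q k.+1 = q ^+ j * qint q (k.+1 - j) + qint q j.
  by move=> j; rewrite addrC -qint_add subnKC // -ltnS ltn_ord.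
under eq_bigr => j _ do rewrite (hs j) mulrDl.
rewrite big_split /= mulrDl !mulr_sumr; congr (_ + _).
  rewrite big_ord_recr /= subnn qint0 mulr0 mul0r addr0.
  apply: eq_bigr => j _; rewrite /=.
  have hj : (j <= k)%N by rewrite -ltnS ltn_ord.
  rewrite subSn // /ee big_ord_recr /= qfactS.
  have hqm := hq (k - j).+1 isT.
  have -> : q ^+ k = q ^+ j * q ^+ (k - j) by rewrite -exprD subnKC.
  field.
  by rewrite !nf hqm.
rewrite big_ord_recl /= qint0 !mul0r add0r.
apply: eq_bigr => j _; rewrite /bump /= add1n subSS qfactS exprS.
have hqm := hq j.+1 isT.
field.
by rewrite !nf hqm.
Qed.

Lemma PP_closed (F : fieldType) (q : F)
  (hq : forall m : nat, (1 <= m)%N -> qint q m != 0) x k :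
  PP q x k = (\prod_(i < k) (q ^+ i + x)) / qfact q k.
Proof.
have nf := qfact_neq0 hq.
elim: k => [|k IH].
  by rewrite /PP big_ord1 big_ord0 /= /ee big_ord0 qfact0 expr0 !mul1r invr1.
have hk := hq k.+1 isT.
have -> : PP q x k.+1 = (qint q k.+1)^-1 * (qint q k.+1 * PP q x k.+1).
  by rewrite mulrA mulVf // mul1r.
rewrite PP_rec // IH big_ord_recr /= qfactS.
field.
by rewrite nf hk.
Qed.

Lemma dd_closed (F : fieldType) (q : F)
  (hq : forall m : nat, (1 <= m)%N -> qint q m != 0) n :
  dd q n = ee q n / qfact q n.
Proof.
have nf := qfact_neq0 hq.
elim/ltn_ind: n => [[|k]] IH.
  by rewrite /= /ee big_ord0 qfact0 invr1 mulr1.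
rewrite /= hB.
have h0 := PP_closed hq (-1) k.+1.
rewrite big_ord_recl /= expr0 addrN mul0r in h0.
move: h0; rewrite /PP big_ord_recl /= expr0 mul1r subn0 qfact0 mul1r.
rewrite mul0r => /eqP; rewrite addr_eq0 => /eqP ->.
rewrite -sumrN; apply: eq_bigr => j _.
rewrite IH; last by rewrite ltnS leq_subr.
rewrite /bump /= add1n subSS exprS /vv expr1n addn1.
field.
by rewrite !nf.
Qed.

Theorem corollary2p5 (F : fieldType) (q : F)
  (hq : forall m : nat, (1 <= m)%N -> qint q m != 0)
  (k : nat) (hk : (1 <= k)%N) (t : F) :
  \det (qmat q t k) = (\prod_(i < k) (q ^+ i - t)) / qfact q k.
Proof.
have nf := qfact_neq0 hq.
have -> : qmat q t k = Gm q (vv q t 0) k.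
  by apply/matrixP => i j; rewrite !mxE /vv addn0.
rewrite hB -PP_closed // /PP; apply: eq_bigr => j _.
rewrite dd_closed // /vv addn0 exprNn.
rewrite [(- t) ^+ _]exprNn expr1n mulr1. field.
by rewrite !nf.
Qed.
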